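(* Let $G$ be a finitely generated group, $U$ a finite generating set of $G$, and $H\leqslant G$ with $[G:H]=d$. There exists a finite generating set $V$ of $H$ such that $|V|\geqslant\frac{1}{d}|U|$ and $V\subset B_U(2d!+1)$.
   Context: $B_U(r)$ denotes the closed ball of radius $r$ about the identity in $G$ for the word metric induced by $U$. *)

(* Defs.v *)
From HB Require Import structures.
From mathcomp Require Import all_boot.
Set Implicit Arguments. Unset Strict Implicit. Unset Printing Implicit Defensive.
Local Open Scope group_scope.

Section Words.
Variable G : groupType.

Definition word_in (S : seq G) (w : seq G) : bool :=
  all (fun x => (x \in S) || (x^-1 \in S)) w.

Definition word_val (w : seq G) : G := \prod_(x <- w) x.

Definition ball (S : seq G) (r : nat) (g : G) : Prop :=
  exists w : seq G, [/\ size w <= r, word_in S w & g = word_val w].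

Definition generates (S : seq G) (K : {pred G}) : Prop :=
  {subset S <= K} /\
  forall h, h \in K -> exists w : seq G, word_in S w /\ h = word_val w.

(* H has index d in G: there are d left coset representatives t_0..t_{d-1}
   such that every g lies in exactly one coset t_i H. *)
Definition has_index (H : {pred G}) (d : nat) : Prop :=
  exists t : d.-tuple G, forall g : G, exists! i : 'I_d, (tnth t i)^-1 * g \in H.

End Words.

(* Main.v *)
Require Import Defs.
From HB Require Import structures.
From mathcomp Require Import all_boot.
From mathcomp Require Import zify.
Local Open Scope group_scope.

Section Proof.
Variable G : groupType.
Variable H : {pred G}.
Hypothesis HC : group_closed H.

Lemma H1 : 1 \in H. Proof. by case: HC. Qed.
Lemma HV x : x \in H -> x^-1 \in H. Proof. exact: (group_closedV HC). Qed.
Lemma HM x y : x \in H -> y \in H -> x * y \in H.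
Proof. exact: (group_closedM HC). Qed.
Arguments HV {x}. Arguments HM {x y}.

Lemma word_val_nil : word_val [::] = 1 :> G. Proof. by rewrite /word_val big_nil. Qed.
Lemma word_val_cons (x : G) w : word_val (x :: w) = x * word_val w.
Proof. by rewrite /word_val big_cons. Qed.
Lemma word_val_cat (w1 w2 : seq G) : word_val (w1 ++ w2) = word_val w1 * word_val w2.
Proof. by rewrite /word_val big_cat. Qed.

Definition winv (w : seq G) := rev (map (fun x : G => x^-1) w).
Lemma word_val_winv w : word_val (winv w) = (word_val w)^-1.
Proof. by rewrite /word_val /winv -map_rev big_map prodgV revK. Qed.
Lemma word_in_winv S w : word_in S (winv w) = word_in S w.
Proof.
rewrite /word_in /winv all_rev all_map; apply: eq_all => x /=.
by rewrite invgK orbC.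
Qed.

Variable d' : nat.
Variable t : d'.+1.-tuple G.
Hypothesis Ht : forall g : G, exists! i : 'I_d'.+1, (tnth t i)^-1 * g \in H.

Definition idx (g : G) : 'I_d'.+1 :=
  odflt ord0 [pick i | (tnth t i)^-1 * g \in H].

Lemma idxP g : (tnth t (idx g))^-1 * g \in H.
Proof.
rewrite /idx; case: pickP => [i //| /= none].
have [i [Hi _]] := Ht g; by rewrite none in Hi.
Qed.

Lemma idx_uniq i g : (tnth t i)^-1 * g \in H -> idx g = i.
Proof.
move=> Hi; have [j [_ U]] := Ht g.
by rewrite -(U _ (idxP g)) -(U _ Hi).
Qed.

Lemma idx_eq a b : (idx a == idx b) = (a^-1 * b \in H).
Proof.
apply/eqP/idP => [E | Hab].
  have ha := idxP a; have hb := idxP b; rewrite E in ha.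
  have := HM (HV ha) hb.
  by rewrite invgM invgK -mulgA mulVKg.
apply/esym; apply: idx_uniq; rewrite -[b](mulVKg a) mulgA.
exact: HM (idxP a) Hab.
Qed.

Lemma idx_tnth i : idx (tnth t i) = i.
Proof. by apply: idx_uniq; rewrite mulVg H1. Qed.

Lemma idxM x a b : idx a = idx b -> idx (x * a) = idx (x * b).
Proof.
move/eqP; rewrite idx_eq => h; apply/eqP; rewrite idx_eq.
by rewrite invgM -mulgA mulKg.
Qed.

Lemma shorten (U : seq G) w : word_in U w ->
  exists w', [/\ word_in U w', size w' <= d' & idx (word_val w') = idx (word_val w)].
Proof.
have [n] := ubnP (size w); elim: n w => // n IH w; rewrite ltnS => Hs Hw.
case: (leqP (size w) d') => Hd; first by exists w.
have key : forall a b : nat, a < b <= size w ->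
    idx (word_val (drop a w)) = idx (word_val (drop b w)) ->
  exists w', [/\ word_in U w', size w' <= d' & idx (word_val w') = idx (word_val w)].
  move=> a b /andP[ab bs] E.
  set w' := take a w ++ drop b w.
  have Hw' : word_in U w'.
    move: Hw; rewrite /word_in -{1}(cat_take_drop b w) all_cat => /andP[h1 h2].
    rewrite all_cat h2 andbT.
    by move: h1; rewrite -{1}(cat_take_drop a (take b w)) all_cat take_takel ?(ltnW ab) // => /andP[].
  have Hsz : size w' < n.
    rewrite size_cat size_take (leq_trans ab bs) size_drop; lia.
  have [w'' [h1 h2 h3]] := IH w' Hsz Hw'.
  exists w''; split => //; rewrite h3 /w'.
  rewrite /w' word_val_cat -{3}(cat_take_drop a w) word_val_cat.
  apply: idxM; rewrite E.
  done.
pose f (k : 'I_d'.+2) : 'I_d'.+1 := idx (word_val (drop k w)).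
have : ~~ injectiveb f.
  apply/negP => /injectiveP inj; have := leq_card _ inj.
  by rewrite !card_ord ltnn.
case/injectivePn => k1 [k2 Hne Heq].
have k1s : k1 <= size w by have := ltn_ord k1; lia.
have k2s : k2 <= size w by have := ltn_ord k2; lia.
case: (ltngtP k1 k2) => c.
- by apply: (key k1 k2); [rewrite c k2s|].
- by apply: (key k2 k1); [rewrite c k1s|].
- by move: Hne; rewrite -val_eqE /= c eqxx.
Qed.

Variable U : seq G.
Variable rw : 'I_d'.+1 -> seq G.
Hypothesis rw_in : forall i, word_in U (rw i).
Hypothesis rw_size : forall i, size (rw i) <= d'.
Hypothesis rw_idx : forall i, idx (word_val (rw i)) = i.

Definition rv i := word_val (rw i).
Definition L := U ++ map (fun x : G => x^-1) U.
Definition gen (x : G) (j : 'I_d'.+1) := (rv (idx (x * rv j)))^-1 * x * rv j.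
Definition V1 := [seq gen x j | x <- L, j <- enum 'I_d'.+1].

Lemma gen_V1 x j : (x \in U) || (x^-1 \in U) -> gen x j \in V1.
Proof.
move=> hx; apply: allpairs_f; last by rewrite mem_enum.
rewrite mem_cat; case/orP: hx => [->//|hx]; apply/orP; right.
by rewrite -[x]invgK; apply: map_f.
Qed.

Lemma factor w j : word_in U w -> exists z, all (mem V1) z /\
  word_val w * rv j = rv (idx (word_val w * rv j)) * word_val z.
Proof.
elim: w => [|x w IH] /=.
  move=> _; exists [::]; split => //.
  by rewrite word_val_nil mul1g /rv rw_idx mulg1.
case/andP => hx /IH [z [hz E]].
set k := idx (word_val w * rv j).
exists (gen x k :: z); split; first by rewrite /= gen_V1.
rewrite !word_val_cons -mulgA.
have -> : idx (x * (word_val w * rv j)) = idx (x * rv k).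
  by apply: idxM; rewrite /rv rw_idx.
rewrite E.
by rewrite /gen !mulgA mulgV mul1g.
Qed.

End Proof.
Arguments shorten {G H} HC {d' t} Ht {U w}.
Arguments idx_eq {G H} HC {d' t} Ht a b.
Arguments idx_tnth {G H} HC {d' t} Ht i.
Arguments factor {G H} HC {d' t} Ht {U rw} rw_idx w j.
Arguments gen_V1 {G H d' t U rw x} j.
Arguments HV {G H} HC {x}.
Arguments HM {G H} HC {x y}.

Lemma pig (T : eqType) n (f : T -> 'I_n.+1) (s : seq T) :
  exists i, size s <= n.+1 * count (fun u => f u == i) s.
Proof.
have Hsum : \sum_(i < n.+1) count (fun u => f u == i) s = size s.
  elim: s => [|x s IH]; first by rewrite big1.
  rewrite /= big_split /= IH (bigD1 (f x)) //= eqxx big1 // => i /negbTE.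
  by rewrite eq_sym => ->.
exists [arg max_(i > ord0) count (fun u => f u == i) s].
case: arg_maxnP => // i _ Hmax.
rewrite -{1}Hsum.
apply: (@leq_trans (\sum_(j < n.+1) count (fun u => f u == i) s)).
  by apply: leq_sum => j _; apply: Hmax.
by rewrite sum_nat_const card_ord.
Qed.
Arguments pig {T n} f s.

Theorem proposition2p33 (G : groupType) (U : seq G) (H : {pred G}) (d : nat) :
  uniq U -> generates U predT ->
  group_closed H -> has_index H d ->
  exists V : seq G,
    [/\ uniq V, generates V H,
        size U <= d * size V
      & forall v, v \in V -> ball U (2 * d`! + 1) v].
Proof.
move=> uU gU HC [t Ht].
case: d t Ht => [|d'] t Ht; first by have [i _] := Ht 1; case: i.
have ex i : exists w, [&& word_in U w, size w <= d' & idx G H d' t (word_val w) == i].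
  have [w [hw e]] := gU.2 (tnth t i) isT.
  have [w' [h1 h2 h3]] := shorten HC Ht hw.
  by exists w'; rewrite h1 h2 /= h3 -e idx_tnth.
pose rw i := xchoose (ex i).
have rwP i : [&& word_in U (rw i), size (rw i) <= d' & idx G H d' t (word_val (rw i)) == i].
  exact: xchooseP (ex i).
have rw_in i : word_in U (rw i) by case/and3P: (rwP i).
have rw_size i : size (rw i) <= d' by case/and3P: (rwP i).
have rw_idx i : idx G H d' t (word_val (rw i)) = i by case/and3P: (rwP i) => _ _ /eqP.
have rv_idx i : idx G H d' t (rv G d' rw i) = i := rw_idx i.
have fgt : d' < d'.+1`! by rewrite factS; exact: leq_pmulr (fact_gt0 d').
pose i0 := idx G H d' t 1.
pose r0 := rv G d' rw i0.
have r0H : r0 \in H.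
  by rewrite -[r0]mul1g -invg1 -(idx_eq HC Ht) rv_idx.
have [im Him] := pig (idx G H d' t) U.
pose s := [seq u <- U | idx G H d' t u == im].
pose u0 := nth 1 s 0.
pose P := [seq u0^-1 * u | u <- s].
have Pprop v : v \in P -> v \in H /\ ball U (2 * d'.+1`! + 1) v.
  case/mapP => u hu ->.
  have s0 : 0 < size s by rewrite lt0n size_eq0; apply/eqP => e; rewrite e in hu.
  have := mem_nth 1 s0; rewrite -/u0 mem_filter => /andP[/eqP i1 h1].
  move: hu; rewrite mem_filter => /andP[/eqP i2 h2].
  split; first by rewrite -(idx_eq HC Ht) i1 i2.
  exists [:: u0^-1; u]; split.
  - by have := fgt; rewrite /=; lia.
  - by rewrite /word_in /= invgK h1 h2 orbT.
  - by rewrite !word_val_cons word_val_nil mulg1.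
pose V := undup (r0 :: V1 G H d' t U rw ++ P).
have memV1 v : v \in V1 G H d' t U rw -> v \in V.
  by move=> hv; rewrite mem_undup inE mem_cat hv orbT.
have memP v : v \in P -> v \in V.
  by move=> hv; rewrite mem_undup inE mem_cat hv !orbT.
have memr0 : r0 \in V by rewrite mem_undup mem_head.
exists V; split.
- exact: undup_uniq.
- split.
  + move=> v; rewrite mem_undup inE mem_cat => /or3P [/eqP->| hv | hv] //.
      case/allpairsP: hv => [[x j] [hx hj ->]] /=.
      by rewrite /gen -mulgA -(idx_eq HC Ht) rv_idx.
    by case: (Pprop v hv).
  + move=> h hh.
    have [w [hw e]] := gU.2 h isT.
    have [z [hz E]] := factor HC Ht rw_idx w i0 hw.
    have ei : idx G H d' t (word_val w * rv G d' rw i0) = i0.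
      apply/eqP; rewrite eq_sym (idx_eq HC Ht) invg1 mul1g -e.
      exact (HM HC hh r0H).
    rewrite ei -/r0 in E.
    exists (r0 :: z ++ [:: r0^-1]); split.
      rewrite /word_in /= all_cat /= invgK memr0 orbT /= andbT.
      by apply/allP => x /(allP hz) hx; rewrite memV1.
    by rewrite word_val_cons word_val_cat word_val_cons word_val_nil mulg1 mulgA -E mulgK e.
- apply: (leq_trans Him); rewrite leq_mul2l; apply/orP; right.
  rewrite -size_filter -/s -(size_map (fun u => u0^-1 * u)) -/P.
  apply: uniq_leq_size; last exact: memP.
  by rewrite map_inj_uniq ?filter_uniq //; apply: mulgI.
- move=> v; rewrite mem_undup inE mem_cat => /or3P [/eqP->| hv | hv].
  + exists (rw i0); split => //; first by apply: leq_trans (rw_size i0) _; have := fgt; lia.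
  + case/allpairsP: hv => [[x j] [hx hj ->]] /=.
    exists (winv G (rw (idx G H d' t (x * rv G d' rw j))) ++ x :: rw j); split.
    * rewrite size_cat /winv size_rev size_map /=.
      apply: leq_trans (leq_add (rw_size _) (rw_size j : (size (rw j)).+1 <= d'.+1)) _.
      by have := fgt; lia. 
    * rewrite /word_in all_cat; apply/andP; split.
        exact: (etrans (word_in_winv G U _) (rw_in _)).
      rewrite /=; apply/andP; split; last exact: rw_in j.
      move: hx => /=; rewrite /L mem_cat => /orP[-> //|/mapP[y hy ->]].
      by rewrite invgK hy orbT.
    * by rewrite word_val_cat word_val_winv word_val_cons /gen -mulgA.
  + by case: (Pprop v hv).
Qed.
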